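(* For every integer $b\geq 2$, $$\bar J(b)+\frac{(-1)^{b-1}}{2^b}J(b)=\lambda(b)\ln 2+\sum_{j=1}^{b-2}\frac{(-1)^{j+1}}{2^{j+1}}\lambda(b-j)\zeta(j+1),$$ where an empty sum equals $0$.
   Context: $S_n=1+\frac13+\cdots+\frac{1}{2n-1}$ for $n\geq 1$. For $b>1$, $J(b)=\sum_{n\geq 1}\frac{S_n}{n^b}$ and $\bar J(b)=\sum_{n\geq 1}\frac{S_n}{(2n-1)^b}$. For real $s>1$, $\lambda(s)=\sum_{n\geq 1}\frac{1}{(2n-1)^s}=(1-2^{-s})\zeta(s)$, and $\zeta$ is the Riemann zeta function. *)

(* Defs.v *)
From Stdlib Require Import Reals.
From Coquelicot Require Import Coquelicot.
Open Scope R_scope.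

Definition Sodd (n : nat) : R := sum_n_m (fun k => / (2 * INR k - 1)) 1 n.

Definition zeta (s : nat) : R := Series (fun n => / (INR (S n)) ^ s).

Definition lambda (s : nat) : R := Series (fun n => / (2 * INR n + 1) ^ s).

Definition J (b : nat) : R := Series (fun n => Sodd (S n) / (INR (S n)) ^ b).

Definition Jbar (b : nat) : R :=
  Series (fun n => Sodd (S n) / (2 * INR (S n) - 1) ^ b).

(* Main.v *)
Require Import Defs.
From Stdlib Require Import Reals Lra Lia.
From Coquelicot Require Import Coquelicot.
Open Scope R_scope.

Fixpoint fs (f : nat -> R) (n : nat) : R :=
  match n with O => 0 | S n => fs f n + f n end.

Lemma fs_ext f g n : (forall i, (i < n)%nat -> f i = g i) -> fs f n = fs g n.
Proof.
  induction n; intros H; simpl; auto.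
  rewrite IHn; [rewrite H; auto|intros; apply H; lia].
Qed.

Lemma fs_zero n : fs (fun _ => 0) n = 0.
Proof. induction n; simpl; auto; rewrite IHn; ring. Qed.

Lemma fs_plus f g n : fs (fun i => f i + g i) n = fs f n + fs g n.
Proof. induction n; simpl. ring. rewrite IHn; ring. Qed.

Lemma fs_minus f g n : fs (fun i => f i - g i) n = fs f n - fs g n.
Proof. induction n; simpl. ring. rewrite IHn; ring. Qed.

Lemma fs_scal c f n : fs (fun i => c * f i) n = c * fs f n.
Proof. induction n; simpl. ring. rewrite IHn; ring. Qed.

Lemma fs_le f g n : (forall i, (i < n)%nat -> f i <= g i) -> fs f n <= fs g n.
Proof.
  induction n; intros H; simpl. lra.
  assert (fs f n <= fs g n) by (apply IHn; intros; apply H; lia).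
  assert (f n <= g n) by (apply H; lia). lra.
Qed.

Lemma fs_nonneg f n : (forall i, (i < n)%nat -> 0 <= f i) -> 0 <= fs f n.
Proof. intros H. rewrite <- (fs_zero n). apply fs_le. auto. Qed.

Lemma fs_swap (f : nat -> nat -> R) n m :
  fs (fun i => fs (fun j => f i j) m) n = fs (fun j => fs (fun i => f i j) n) m.
Proof.
  induction n; simpl. rewrite fs_zero; auto.
  rewrite IHn. rewrite <- fs_plus. auto.
Qed.

Lemma fs_prod f g n m : fs f n * fs g m = fs (fun i => fs (fun j => f i * g j) m) n.
Proof.
  rewrite Rmult_comm, <- fs_scal. apply fs_ext; intros.
  rewrite Rmult_comm, <- fs_scal. auto.
Qed.

Lemma fs_shift f c n : fs (fun k => f (c + k)%nat) n = fs f (c + n) - fs f c.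
Proof.
  induction n; simpl. rewrite Nat.add_0_r; ring.
  rewrite IHn, Nat.add_succ_r. simpl. ring.
Qed.

Lemma fs_first f n : fs f (S n) = f 0%nat + fs (fun i => f (S i)) n.
Proof. induction n. simpl; ring. change (fs f (S (S n)) = f 0%nat + (fs (fun i => f (S i)) n + f (S n))).
  simpl. simpl in IHn. rewrite IHn. ring. Qed.

Lemma sum_n_fs (a : nat -> R) n : sum_n a n = fs a (S n).
Proof.
  induction n. unfold sum_n. rewrite sum_n_n. simpl; ring.
  unfold sum_n in *. rewrite sum_n_Sm by lia. rewrite IHn. reflexivity.
Qed.

Lemma sum_n_m_1_fs (f : nat -> R) n : sum_n_m f 1 n = fs (fun j => f (S j)) n.
Proof.
  induction n. rewrite sum_n_m_zero by lia. reflexivity.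
  rewrite sum_n_Sm by lia. rewrite IHn. reflexivity.
Qed.

Lemma fs_sum_f_R0 f n : sum_f_R0 f n = fs f (S n).
Proof. induction n; simpl. ring. simpl in IHn. rewrite IHn. ring. Qed.

Lemma fs_lim (F : nat -> nat -> R) (L : nat -> R) n :
  (forall j, (j < n)%nat -> is_lim_seq (F j) (L j)) ->
  is_lim_seq (fun N => fs (fun j => F j N) n) (fs L n).
Proof.
  induction n; intros H; simpl. apply is_lim_seq_const.
  apply is_lim_seq_plus'. apply IHn; intros; apply H; lia. apply H; lia.
Qed.

Lemma pos_bnd_ex a M : (forall n, 0 <= a n) -> (forall N, fs a N <= M) -> ex_series a.
Proof.
  intros H0 HM.
  destruct (ex_finite_lim_seq_incr (sum_n a) M) as [l Hl].
  - intros n. rewrite !sum_n_fs. simpl. specialize (H0 (S n)). simpl in H0. lra.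
  - intros n. rewrite sum_n_fs. apply HM.
  - exists l. exact Hl.
Qed.

Lemma cmp_ex a g M : (forall n, 0 <= a n <= g n) -> (forall N, fs g N <= M) -> ex_series a.
Proof.
  intros H HM. apply (pos_bnd_ex a M). intros n; apply H.
  intros N. eapply Rle_trans; [|apply HM]. apply fs_le. intros; apply H.
Qed.

Lemma series_lim a : ex_series a -> is_lim_seq (fun N => fs a N) (Series a).
Proof.
  intros H. apply Series_correct in H.
  apply is_lim_seq_incr_1. eapply is_lim_seq_ext; [|exact H].
  intros n. apply sum_n_fs.
Qed.
Definition So n := fs (fun i => / (2 * INR i + 1)) n.
Definition Lam s N := fs (fun k => / (2 * INR k + 1) ^ s) N.
Definition Hs s N := fs (fun m => / INR (S m) ^ s) N.
Definition E1 b N := fs (fun m => (So (S m + N) - So N) * / INR (S m) ^ b) N.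
Definition E2 b N := fs (fun k => (So (S k + N) - So N) * / (2 * INR k + 1) ^ b) N.
Definition JN b N := fs (fun m => So (S m) * / INR (S m) ^ b) N.
Definition JbN b N := fs (fun k => So (S k) * / (2 * INR k + 1) ^ b) N.
Definition TT b N := fs (fun j => (-1) ^ (j + 1) / 2 ^ (j + 1) * Lam (b - j) N * Hs (j + 1) N) b.

Lemma Sodd_So n : Sodd n = So n.
Proof.
  unfold Sodd, So. rewrite sum_n_m_1_fs. apply fs_ext. intros i _.
  rewrite S_INR. f_equal. ring.
Qed.

Lemma INR_pos n : 0 < 2 * INR n + 1.
Proof. pose proof (pos_INR n). lra. Qed.

Lemma fs_S f n : fs f (S n) = fs f n + f n.
Proof. reflexivity. Qed.

Lemma geom x z b : x <> 0 -> z <> 0 -> x - z <> 0 ->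
  fs (fun j => / x ^ (b - j) * / z ^ (S j)) b = / (x - z) * (/ z ^ b - / x ^ b).
Proof.
  intros Hx Hz Hxz. induction b as [|b IHb].
  - simpl. field. auto.
  - rewrite fs_S.
    rewrite (fs_ext _ (fun j => / x * (/ x ^ (b - j) * / z ^ S j))).
    2:{ intros i Hi. replace (S b - i)%nat with (S (b - i)) by lia.
        replace (x ^ S (b-i)) with (x * x^(b-i)) by (simpl; ring). rewrite (Rinv_mult x). ring. }
    rewrite fs_scal, IHb. replace (S b - b)%nat with 1%nat by lia.
    assert (x ^ b <> 0) by (apply pow_nonzero; auto).
    assert (z ^ b <> 0) by (apply pow_nonzero; auto).
    simpl. field. repeat split; auto.
Qed.

Lemma m1sq j : (-1) ^ j * (-1) ^ j = 1.
Proof. rewrite <- Rpow_mult_distr. replace (-1 * -1) with 1 by ring. apply pow1. Qed.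

Lemma zpow j y : y <> 0 -> (-1) ^ j / 2 ^ j * / y ^ j = / (- (2 * y)) ^ j.
Proof.
  intros Hy. replace (- (2 * y)) with ((-1) * 2 * y) by ring.
  rewrite !Rpow_mult_distr.
  assert (y ^ j <> 0) by (apply pow_nonzero; auto).
  assert (2 ^ j <> 0) by (apply pow_nonzero; lra).
  assert ((-1) ^ j <> 0) by (apply pow_nonzero; lra).
  pose proof (m1sq j).
  field_simplify; auto. 
  rewrite <- H2 at 1. field. auto.
Qed.

Lemma fs_lin c a d g e n :
  fs (fun i => c * (a i + d * g i - e i)) n = c * (fs a n + d * fs g n - fs e n).
Proof.
  rewrite fs_scal. f_equal. rewrite fs_minus, fs_plus, fs_scal. reflexivity.
Qed.

Lemma INRS_neq n : INR (S n) <> 0.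
Proof. apply not_0_INR. lia. Qed.

Lemma TT_double b N : TT b N =
  fs (fun k => fs (fun m => / (2 * INR (S m + k) + 1) *
        (/ (- (2 * INR (S m))) ^ b - / (2 * INR k + 1) ^ b)) N) N.
Proof.
  unfold TT, Lam, Hs.
  rewrite (fs_ext _ (fun j => fs (fun k => fs (fun m =>
     / (2 * INR k + 1) ^ (b - j) * / (- (2 * INR (S m))) ^ (S j)) N) N)).
  2:{ intros j _. rewrite Rmult_assoc, fs_prod, <- fs_scal. apply fs_ext; intros k _.
      rewrite <- fs_scal. apply fs_ext; intros m _. rewrite Nat.add_1_r, <- zpow.
      ring. apply INRS_neq. }
  rewrite (fs_swap (fun j k => fs (fun m =>
     / (2 * INR k + 1) ^ (b - j) * / (- (2 * INR (S m))) ^ (S j)) N)).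
  apply fs_ext; intros k _.
  rewrite (fs_swap (fun j m => / (2 * INR k + 1) ^ (b - j) * / (- (2 * INR (S m))) ^ (S j))).
  apply fs_ext; intros m _.
  pose proof (INR_pos k). pose proof (pos_INR (S m)). pose proof (INRS_neq m).
  rewrite geom.
  - f_equal. f_equal. rewrite plus_INR. ring.
  - lra.
  - lra.
  - lra.
Qed.

Lemma TT_eval b N : TT b N =
  (-1) ^ b / 2 ^ b * (E1 b N + So N * Hs b N - JN b N)
  - 1 * (E2 b N + So N * Lam b N - JbN b N).
Proof.
  rewrite TT_double.
  rewrite (fs_ext _ (fun k => fs (fun m => / (2 * INR (S m + k) + 1) * / (- (2 * INR (S m))) ^ b) N
                  - fs (fun m => / (2 * INR (S m + k) + 1) * / (2 * INR k + 1) ^ b) N)).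
  2:{ intros k _. rewrite <- fs_minus. apply fs_ext; intros; ring. }
  rewrite fs_minus. f_equal.
  - rewrite (fs_swap (fun k m => / (2 * INR (S m + k) + 1) * / (- (2 * INR (S m))) ^ b)).
    rewrite (fs_ext _ (fun m => (-1) ^ b / 2 ^ b * ((So (S m + N) - So N) * / INR (S m) ^ b
        + So N * / INR (S m) ^ b - So (S m) * / INR (S m) ^ b))).
    + rewrite fs_lin. reflexivity.
    + intros m _. rewrite (fs_ext _ (fun k => / (- (2 * INR (S m))) ^ b * / (2 * INR (S m + k) + 1))).
      2:{ intros; ring. }
      assert (Hs' : fs (fun k => / (2 * INR (S m + k) + 1)) N = So (S m + N) - So (S m))
        by apply (fs_shift (fun i => / (2 * INR i + 1))).
      rewrite fs_scal, Hs'.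
      rewrite <- zpow by apply INRS_neq. ring.
  - rewrite (fs_ext _ (fun k => 1 * ((So (S k + N) - So N) * / (2 * INR k + 1) ^ b
        + So N * / (2 * INR k + 1) ^ b - So (S k) * / (2 * INR k + 1) ^ b))).
    + rewrite fs_lin. reflexivity.
    + intros k _. rewrite (fs_ext _ (fun m => / (2 * INR k + 1) ^ b * / (2 * INR (S k + m) + 1))).
      2:{ intros m _. rewrite !plus_INR, !S_INR.
          replace (2 * (INR m + 1 + INR k) + 1) with (2 * (INR k + 1 + INR m) + 1) by ring. ring. }
      assert (Hs' : fs (fun m => / (2 * INR (S k + m) + 1)) N = So (S k + N) - So (S k))
        by apply (fs_shift (fun i => / (2 * INR i + 1))).
      rewrite fs_scal, Hs'. ring.
Qed.

Lemma Lam1 N : Lam 1 N = So N.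
Proof. unfold Lam, So. apply fs_ext; intros. rewrite pow_1. reflexivity. Qed.

Lemma TT_split c N : TT (S (S c)) N =
  (-1) ^ 1 / 2 ^ 1 * Lam (S (S c)) N * Hs 1 N
  + sum_n_m (fun j => (-1) ^ (j + 1) / 2 ^ (j + 1) * Lam (S (S c) - j) N * Hs (j + 1) N) 1 c
  + (-1) ^ (S (S c)) / 2 ^ (S (S c)) * Lam 1 N * Hs (S (S c)) N.
Proof.
  unfold TT. rewrite fs_S, fs_first, sum_n_m_1_fs.
  replace (S c + 1)%nat with (S (S c)) by lia.
  replace (S (S c) - S c)%nat with 1%nat by lia.
  replace (S (S c) - 0)%nat with (S (S c)) by lia.
  replace (0 + 1)%nat with 1%nat by lia. reflexivity.
Qed.

Lemma fin_id c N :
  let b := S (S c) in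
  JbN b N + (-1) ^ (b - 1) / 2 ^ b * JN b N =
  Lam b N * (So N - Hs 1 N / 2)
  + sum_n_m (fun j => (-1) ^ (j + 1) / 2 ^ (j + 1) * Lam (b - j) N * Hs (j + 1) N) 1 (b - 2)
  + E2 b N - (-1) ^ b / 2 ^ b * E1 b N.
Proof.
  intros b. pose proof (TT_eval b N) as H1. pose proof (TT_split c N) as H2.
  fold b in H2. rewrite Lam1 in H2. rewrite H1 in H2.
  replace (b - 2)%nat with c by (unfold b; lia).
  assert (Hp : (-1) ^ (b - 1) = - (-1) ^ b).
  { unfold b. replace (S (S c) - 1)%nat with (S c) by lia. simpl. ring. }
  rewrite Hp.
  set (pb := (-1) ^ b / 2 ^ b) in *.
  set (M := sum_n_m _ 1 c) in *.
  replace ((-1) ^ 1 / 2 ^ 1) with (- / 2) in H2 by (simpl; field).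
  replace (- (-1) ^ b / 2 ^ b) with (- pb) by (unfold pb; field; apply pow_nonzero; lra).
  nra.
Qed.

Lemma INRS_ge1 n : 1 <= INR (S n).
Proof. rewrite S_INR. pose proof (pos_INR n). lra. Qed.

Lemma inv_pow_le x s : 1 <= x -> (2 <= s)%nat -> 0 <= / x ^ s <= / x ^ 2.
Proof.
  intros Hx Hs. split.
  - left; apply Rinv_0_lt_compat, pow_lt; lra.
  - apply Rinv_le_contravar. apply pow_lt; lra. apply Rle_pow; auto.
Qed.

Definition g2 n := / INR (S n) ^ 2.

Lemma g2_bnd N : fs g2 N <= 2.
Proof.
  assert (H : forall N, fs g2 (S N) <= 2 - / INR (S N)).
  { clear N. intro N. induction N.
    - simpl. unfold g2. simpl. rewrite !Rmult_1_r, Rinv_1. lra.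
    - rewrite fs_S. unfold g2 at 2.
      pose proof (INRS_ge1 N) as Ha. rewrite (S_INR (S N)).
      set (a := INR (S N)) in *.
      assert (/ (a + 1) ^ 2 <= / a - / (a + 1)).
      { replace (/ a - / (a + 1)) with (/ (a * (a + 1))) by (field; lra).
        apply Rinv_le_contravar. nra. simpl. nra. }
      lra. }
  destruct N. simpl; lra. specialize (H N). pose proof (INRS_ge1 N).
  assert (0 < / INR (S N)) by (apply Rinv_0_lt_compat; lra). lra.
Qed.

Lemma zeta_lim s : (2 <= s)%nat -> is_lim_seq (Hs s) (zeta s).
Proof.
  intros Hs2. unfold zeta. apply (is_lim_seq_ext (fun N => fs (fun n => / INR (S n) ^ s) N)).
  { intros; reflexivity. }
  apply series_lim. apply (cmp_ex _ g2 2); [|apply g2_bnd].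
  intros n. unfold g2. apply inv_pow_le; auto. apply INRS_ge1.
Qed.

Lemma lam_lim s : (2 <= s)%nat -> is_lim_seq (Lam s) (lambda s).
Proof.
  intros Hs2. unfold lambda. apply (is_lim_seq_ext (fun N => fs (fun n => / (2 * INR n + 1) ^ s) N)).
  { intros; reflexivity. }
  apply series_lim. apply (cmp_ex _ g2 2); [|apply g2_bnd].
  intros n. unfold g2. pose proof (pos_INR n).
  destruct (inv_pow_le (2 * INR n + 1) s) as [H1 H2]; auto. lra.
  split; auto. eapply Rle_trans; [apply H2|].
  apply Rinv_le_contravar. apply pow_lt. apply lt_0_INR; lia.
  apply pow_incr. rewrite S_INR. split; lra.
Qed.

Lemma So_nonneg n : 0 <= So n.
Proof. unfold So. apply fs_nonneg. intros. left. apply Rinv_0_lt_compat, INR_pos. Qed.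

Definition gJ n := So (S n) * / INR (S n) ^ 2.

Lemma gJ_bnd N : fs gJ N <= 3.
Proof.
  assert (H : forall N, fs gJ (S N) <= 3 - (So (S N) + 1) / INR (S N)).
  { clear N. intro N. induction N.
    - simpl. unfold gJ, So. simpl. rewrite !Rmult_1_r, Rmult_0_r, Rplus_0_l, Rinv_1. lra.
    - rewrite fs_S. unfold gJ at 2.
      pose proof (INRS_ge1 N) as Ha. pose proof (So_nonneg (S N)) as Hs0.
      assert (HS : So (S (S N)) = So (S N) + / (2 * INR (S N) + 1)) by reflexivity.
      rewrite HS, (S_INR (S N)).
      set (a := INR (S N)) in *. set (s := So (S N)) in *.
      set (t := / (2 * a + 1)).
      assert (Ht : t * (2 * a + 1) = 1) by (unfold t; field; lra).
      assert (Ht0 : 0 < t) by (unfold t; apply Rinv_0_lt_compat; lra).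
      assert (Hk : (s + 1) / a - (s + t + 1) / (a + 1) - (s + t) * / (a + 1) ^ 2
                   = (s + a + 1 - t * a * (a + 2)) / (a * (a + 1) ^ 2)) by (field; lra).
      assert (0 <= (s + a + 1 - t * a * (a + 2)) / (a * (a + 1) ^ 2)).
      { apply Rmult_le_pos. nra. left. apply Rinv_0_lt_compat. simpl. nra. }
      lra. }
  destruct N. simpl; lra. specialize (H N). pose proof (INRS_ge1 N).
  pose proof (So_nonneg (S N)).
  assert (0 < (So (S N) + 1) / INR (S N)) by (apply Rdiv_lt_0_compat; lra). lra.
Qed.

Lemma J_lim b : (2 <= b)%nat -> is_lim_seq (JN b) (J b).
Proof.
  intros Hb. unfold J. apply (is_lim_seq_ext (fun N => fs (fun n => Sodd (S n) / INR (S n) ^ b) N)).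
  { intros N. unfold JN. apply fs_ext. intros. rewrite Sodd_So. reflexivity. }
  apply series_lim. apply (cmp_ex _ gJ 3); [|apply gJ_bnd].
  intros n. unfold gJ. rewrite Sodd_So. pose proof (So_nonneg (S n)).
  destruct (inv_pow_le (INR (S n)) b) as [H1 H2]; auto. apply INRS_ge1.
  unfold Rdiv. split. apply Rmult_le_pos; auto. apply Rmult_le_compat_l; auto.
Qed.

Lemma Jb_lim b : (2 <= b)%nat -> is_lim_seq (JbN b) (Jbar b).
Proof.
  intros Hb. unfold Jbar. apply (is_lim_seq_ext (fun N => fs (fun n => Sodd (S n) / (2 * INR (S n) - 1) ^ b) N)).
  { intros N. unfold JbN. apply fs_ext. intros i _. rewrite Sodd_So, S_INR. replace (2 * (INR i + 1) - 1) with (2 * INR i + 1) by ring. reflexivity. }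
  apply series_lim. apply (cmp_ex _ gJ 3); [|apply gJ_bnd].
  intros n. unfold gJ. rewrite Sodd_So, S_INR. pose proof (So_nonneg (S n)). pose proof (pos_INR n).
  destruct (inv_pow_le (2 * INR n + 2 - 1) b) as [H1 H2]; auto. lra.
  unfold Rdiv. replace (2 * (INR n + 1) - 1) with (2 * INR n + 2 - 1) by ring. split. apply Rmult_le_pos; auto.
  apply Rmult_le_compat_l; auto. eapply Rle_trans; [apply H2|].
  apply Rinv_le_contravar. apply pow_lt. lra.
  apply pow_incr. split; lra.
Qed.

Lemma So_diff N j : 0 <= So (N + j) - So N <= INR j / (2 * INR N + 1).
Proof.
  pose proof (INR_pos N).
  induction j.
  - rewrite Nat.add_0_r. simpl. unfold Rdiv. rewrite Rmult_0_l. lra.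
  - rewrite Nat.add_succ_r. replace (So (S (N + j))) with (So (N + j) + / (2 * INR (N + j) + 1)) by reflexivity.
    rewrite S_INR.
    assert (0 < / (2 * INR (N + j) + 1)) by (apply Rinv_0_lt_compat, INR_pos).
    assert (/ (2 * INR (N + j) + 1) <= / (2 * INR N + 1)).
    { apply Rinv_le_contravar; auto. rewrite plus_INR. pose proof (pos_INR j). lra. }
    unfold Rdiv in *. rewrite Rmult_plus_distr_r. lra.
Qed.

Lemma term_bnd d y a c : 0 < a -> 0 < c -> 0 <= d <= a / c -> 0 <= y <= / a ^ 2 ->
  0 <= d * y <= / c * / a ^ 1.
Proof.
  intros Ha Hc Hd Hy. split. apply Rmult_le_pos; lra.
  eapply Rle_trans. apply Rmult_le_compat; try lra. apply Hd. apply Hy.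
  right. field. lra.
Qed.

Lemma E2_bnd b N : (2 <= b)%nat -> 0 <= E2 b N <= / (2 * INR N + 1) * Hs 1 N.
Proof.
  intros Hb. unfold E2, Hs. rewrite <- fs_scal. split.
  - apply fs_nonneg. intros k _. apply (term_bnd _ _ (INR (S k)) (2 * INR N + 1)).
    + apply lt_0_INR; lia.
    + apply INR_pos.
    + rewrite Nat.add_comm. apply So_diff.
    + pose proof (pos_INR k). destruct (inv_pow_le (2 * INR k + 1) b) as [H1 H2]; auto. lra.
      split; auto. eapply Rle_trans; [apply H2|]. apply Rinv_le_contravar. apply pow_lt, lt_0_INR; lia.
      apply pow_incr. rewrite S_INR. split; lra.
  - apply fs_le. intros k _. apply (term_bnd _ _ (INR (S k)) (2 * INR N + 1)).
    + apply lt_0_INR; lia.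
    + apply INR_pos.
    + rewrite Nat.add_comm. apply So_diff.
    + pose proof (pos_INR k). destruct (inv_pow_le (2 * INR k + 1) b) as [H1 H2]; auto. lra.
      split; auto. eapply Rle_trans; [apply H2|]. apply Rinv_le_contravar. apply pow_lt, lt_0_INR; lia.
      apply pow_incr. rewrite S_INR. split; lra.
Qed.

Lemma E1_bnd b N : (2 <= b)%nat -> 0 <= E1 b N <= / (2 * INR N + 1) * Hs 1 N.
Proof.
  intros Hb. unfold E1, Hs. rewrite <- fs_scal. split.
  - apply fs_nonneg. intros k _. apply (term_bnd _ _ (INR (S k)) (2 * INR N + 1)).
    + apply lt_0_INR; lia.
    + apply INR_pos.
    + rewrite Nat.add_comm. apply So_diff.
    + apply inv_pow_le; auto. apply INRS_ge1.
  - apply fs_le. intros k _. apply (term_bnd _ _ (INR (S k)) (2 * INR N + 1)).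
    + apply lt_0_INR; lia.
    + apply INR_pos.
    + rewrite Nat.add_comm. apply So_diff.
    + apply inv_pow_le; auto. apply INRS_ge1.
Qed.

Lemma inv_lim : is_lim_seq (fun n => / INR (S n)) 0.
Proof.
  replace (Finite 0) with (Rbar_inv p_infty) by reflexivity.
  apply is_lim_seq_inv. 2: discriminate.
  apply (is_lim_seq_incr_1 INR). apply is_lim_seq_INR.
Qed.

Lemma inv2_lim : is_lim_seq (fun n => / (2 * INR n + 1)) 0.
Proof.
  apply (is_lim_seq_le_le (fun _ => 0) _ (fun n => / INR (S n))).
  - intros n. pose proof (INR_pos n). pose proof (pos_INR n). split.
    left; apply Rinv_0_lt_compat; lra.
    apply Rinv_le_contravar. apply lt_0_INR; lia. rewrite S_INR. lra.
  - apply is_lim_seq_const.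
  - apply inv_lim.
Qed.

Lemma W_lim : is_lim_seq (fun N => / (2 * INR N + 1) * Hs 1 N) 0.
Proof.
  assert (HC : is_lim_seq (fun N => Hs 1 (S N) / INR (S N)) 0).
  { pose proof (Cesaro_1 (fun n => / INR (S n)) 0) as HC.
    apply is_lim_seq_Reals in HC. 2: apply is_lim_seq_Reals, inv_lim.
    apply is_lim_seq_incr_1 in HC. eapply is_lim_seq_ext; [|exact HC].
    intros n. cbv beta. simpl pred. rewrite fs_sum_f_R0. unfold Hs. f_equal. apply fs_ext.
    intros. rewrite pow_1. reflexivity. }
  apply is_lim_seq_incr_1.
  apply (is_lim_seq_le_le (fun _ => 0) (fun n => / (2 * INR (S n) + 1) * Hs 1 (S n)) (fun N => Hs 1 (S N) / INR (S N))); [| apply is_lim_seq_const | exact HC].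
  intros n. assert (0 <= Hs 1 (S n)).
  { unfold Hs. apply fs_nonneg. intros. rewrite pow_1. left. apply Rinv_0_lt_compat, lt_0_INR; lia. }
  pose proof (INR_pos (S n)). pose proof (INRS_ge1 n). split.
  apply Rmult_le_pos; auto. left; apply Rinv_0_lt_compat; lra.
  unfold Rdiv. rewrite Rmult_comm. apply Rmult_le_compat_l; auto.
  apply Rinv_le_contravar. lra. lra.
Qed.

Lemma E_lims b : (2 <= b)%nat -> is_lim_seq (E1 b) 0 /\ is_lim_seq (E2 b) 0.
Proof.
  intros Hb. split.
  - apply (is_lim_seq_le_le (fun _ => 0) (E1 b) (fun N => / (2 * INR N + 1) * Hs 1 N) 0); [| apply is_lim_seq_const | exact W_lim].
    intros; apply E1_bnd; auto.
  - apply (is_lim_seq_le_le (fun _ => 0) (E2 b) (fun N => / (2 * INR N + 1) * Hs 1 N) 0); [| apply is_lim_seq_const | exact W_lim].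
    intros; apply E2_bnd; auto.
Qed.

Definition Hh n := fs (fun i => / INR (S i)) n.

Lemma Hs1_Hh n : Hs 1 n = Hh n.
Proof. unfold Hs, Hh. apply fs_ext. intros. rewrite pow_1. reflexivity. Qed.

Lemma Hh_double n : Hh (n + n) = So n + Hh n / 2.
Proof.
  induction n.
  - simpl. unfold Hh, So. simpl. field.
  - replace (S n + S n)%nat with (S (S (n + n))) by lia.
    unfold Hh at 1. rewrite !fs_S. fold (Hh (n + n)). rewrite IHn.
    replace (So (S n)) with (So n + / (2 * INR n + 1)) by reflexivity.
    replace (Hh (S n)) with (Hh n + / INR (S n)) by reflexivity.
    rewrite !S_INR, plus_INR. pose proof (pos_INR n).
    field. lra.
Qed.

Lemma ln_le_sub1 y : 0 < y -> ln y <= y - 1.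
Proof.
  intros Hy. pose proof (exp_ineq1_le (y - 1)).
  rewrite <- (ln_exp (y - 1)). apply ln_le; auto. lra.
Qed.

Lemma step_a m : 0 < m -> / (m + 1) <= ln (m + 1) - ln m.
Proof.
  intros Hm. assert (h1 : 0 < / (m + 1)) by (apply Rinv_0_lt_compat; lra).
  assert (h2 : 0 < m * / (m + 1)) by (apply Rmult_lt_0_compat; lra).
  pose proof (ln_le_sub1 _ h2) as H.
  rewrite ln_mult in H by lra. rewrite ln_Rinv in H by lra.
  replace (m * / (m + 1) - 1) with (- / (m + 1)) in H by (field; lra). lra.
Qed.

Lemma step_b m : 0 < m -> ln (m + 1) - ln m <= / m.
Proof.
  intros Hm. assert (h1 : 0 < / m) by (apply Rinv_0_lt_compat; lra).
  assert (h2 : 0 < (m + 1) * / m) by (apply Rmult_lt_0_compat; lra).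
  pose proof (ln_le_sub1 _ h2) as H.
  rewrite ln_mult in H by lra. rewrite ln_Rinv in H by lra.
  replace ((m + 1) * / m - 1) with (/ m) in H by (field; lra). lra.
Qed.

Lemma monoA n k : (1 <= n)%nat -> Hh (n + k) - ln (INR (n + k)) <= Hh n - ln (INR n).
Proof.
  intros Hn. induction k.
  - rewrite Nat.add_0_r. lra.
  - rewrite Nat.add_succ_r.
    replace (Hh (S (n + k))) with (Hh (n + k) + / INR (S (n + k))) by reflexivity.
    rewrite S_INR. assert (0 < INR (n + k)) by (apply lt_0_INR; lia).
    pose proof (step_a (INR (n + k)) H). lra.
Qed.

Lemma monoB n k : Hh n - ln (INR n + 1) <= Hh (n + k) - ln (INR (n + k) + 1).
Proof.
  induction k.
  - rewrite Nat.add_0_r. lra.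
  - rewrite Nat.add_succ_r.
    replace (Hh (S (n + k))) with (Hh (n + k) + / INR (S (n + k))) by reflexivity.
    rewrite S_INR. pose proof (pos_INR (n + k)).
    pose proof (step_b (INR (n + k) + 1)). lra.
Qed.

Lemma D_bnd n : (1 <= n)%nat ->
  ln 2 - / (2 * INR n + 1) <= Hh (n + n) - Hh n <= ln 2.
Proof.
  intros Hn. assert (Hp : 0 < INR n) by (apply lt_0_INR; lia).
  pose proof (monoA n n Hn) as HA. pose proof (monoB n n) as HB.
  rewrite plus_INR in HA, HB.
  replace (INR n + INR n) with (2 * INR n) in HA, HB by ring.
  rewrite ln_mult in HA by lra.
  pose proof (step_b (2 * INR n + 1)) as Hs.
  replace (2 * INR n + 1 + 1) with (2 * (INR n + 1)) in Hs by ring.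
  rewrite ln_mult in Hs by lra. lra.
Qed.

Lemma ln2_lim : is_lim_seq (fun N => So N - Hs 1 N / 2) (ln 2).
Proof.
  apply is_lim_seq_incr_1.
  assert (HL : is_lim_seq (fun N => ln 2 - / (2 * INR (S N) + 1)) (ln 2 - 0)).
  { apply is_lim_seq_minus'. apply is_lim_seq_const.
    apply (is_lim_seq_incr_1 (fun n => / (2 * INR n + 1))). apply inv2_lim. }
  replace (ln 2 - 0) with (ln 2) in HL by ring.
  apply (is_lim_seq_le_le (fun N => ln 2 - / (2 * INR (S N) + 1)) _ (fun _ => ln 2)); auto.
  2: apply is_lim_seq_const.
  intros n. cbv beta. rewrite Hs1_Hh.
  assert (E : Hh (S n + S n) - Hh (S n) = So (S n) - Hh (S n) / 2) by (rewrite Hh_double; field).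
  rewrite <- E. apply D_bnd. lia.
Qed.

Theorem mainTheorem9 (b : nat) (hb : (2 <= b)%nat) :
  Jbar b + (-1) ^ (b - 1) / 2 ^ b * J b =
  lambda b * ln 2 +
  sum_n_m (fun j => (-1) ^ (j + 1) / 2 ^ (j + 1) * lambda (b - j) * zeta (j + 1)) 1 (b - 2).
Proof.
  destruct b as [|[|c]]; try lia.
  replace (S (S c) - 2)%nat with c by lia.
  set (pb := (-1) ^ S (S c) / 2 ^ S (S c)).
  set (qb := (-1) ^ (S (S c) - 1) / 2 ^ S (S c)).
  assert (HL : is_lim_seq (fun N => JbN (S (S c)) N + qb * JN (S (S c)) N)
                 (Jbar (S (S c)) + qb * J (S (S c)))).
  { apply is_lim_seq_plus'. apply Jb_lim; lia.
    apply is_lim_seq_mult'. apply is_lim_seq_const. apply J_lim; lia. }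
  assert (HM : is_lim_seq
     (fun N => sum_n_m (fun j => (-1) ^ (j + 1) / 2 ^ (j + 1) * Lam (S (S c) - j) N * Hs (j + 1) N) 1 c)
     (sum_n_m (fun j => (-1) ^ (j + 1) / 2 ^ (j + 1) * lambda (S (S c) - j) * zeta (j + 1)) 1 c)).
  { apply (is_lim_seq_ext (fun N => fs (fun j => (-1) ^ (S j + 1) / 2 ^ (S j + 1) * Lam (S (S c) - S j) N * Hs (S j + 1) N) c)).
    { intros N. symmetry. apply sum_n_m_1_fs. }
    rewrite sum_n_m_1_fs.
    apply (fs_lim (fun j N => (-1) ^ (S j + 1) / 2 ^ (S j + 1) * Lam (S (S c) - S j) N * Hs (S j + 1) N)
                  (fun j => (-1) ^ (S j + 1) / 2 ^ (S j + 1) * lambda (S (S c) - S j) * zeta (S j + 1))).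
    intros j Hj. apply is_lim_seq_mult'. apply is_lim_seq_mult'. apply is_lim_seq_const.
    apply lam_lim; lia. apply zeta_lim; lia. }
  destruct (E_lims (S (S c))) as [HE1 HE2]; [lia|].
  assert (HR : is_lim_seq (fun N => Lam (S (S c)) N * (So N - Hs 1 N / 2)
        + sum_n_m (fun j => (-1) ^ (j + 1) / 2 ^ (j + 1) * Lam (S (S c) - j) N * Hs (j + 1) N) 1 c
        + E2 (S (S c)) N - pb * E1 (S (S c)) N)
        (lambda (S (S c)) * ln 2
        + sum_n_m (fun j => (-1) ^ (j + 1) / 2 ^ (j + 1) * lambda (S (S c) - j) * zeta (j + 1)) 1 c
        + 0 - pb * 0)).
  { apply is_lim_seq_minus'. apply is_lim_seq_plus'. apply is_lim_seq_plus'.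
    apply is_lim_seq_mult'. apply lam_lim; lia. apply ln2_lim.
    exact HM. exact HE2.
    apply is_lim_seq_mult'. apply is_lim_seq_const. exact HE1. }
  assert (HL' : is_lim_seq (fun N => Lam (S (S c)) N * (So N - Hs 1 N / 2)
        + sum_n_m (fun j => (-1) ^ (j + 1) / 2 ^ (j + 1) * Lam (S (S c) - j) N * Hs (j + 1) N) 1 c
        + E2 (S (S c)) N - pb * E1 (S (S c)) N)
        (Jbar (S (S c)) + qb * J (S (S c)))).
  { eapply is_lim_seq_ext; [|exact HL]. intros N. pose proof (fin_id c N) as F. cbv zeta in F.
    replace (S (S c) - 2)%nat with c in F by lia. exact F. }
  apply is_lim_seq_unique in HL'. apply is_lim_seq_unique in HR.
  rewrite HR in HL'. apply Rbar_finite_eq in HL'. rewrite Rmult_0_r in HL'. lra.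
Qed.
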